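(* Let $p$ and $q$ be distinct primes, $n=pq$, and let $e$ be a positive integer with $\gcd(e,\varphi(n))=1$. For a positive integer $k$, let $E_{n,e,k}$ be the set of residues $m\in\mathbb{Z}_n$ such that $k$ is the smallest positive integer with $m^{e^{k}}\equiv m \pmod n$ (the fixed points of order $k$ of the map $x\mapsto x^{e}\bmod n$). Then $$|E_{n,e,k}|=\sum_{d\mid k}\mu(k/d)\,\bigl(\gcd(e^{d}-1,p-1)+1\bigr)\bigl(\gcd(e^{d}-1,q-1)+1\bigr),$$ where the sum runs over the positive divisors $d$ of $k$ and $\mu$ is the Möbius function.
   Context: $\mathbb{Z}_n$ denotes a complete residue system modulo $n$, $\varphi$ is Euler's totient function, and $\gcd(a,b)$ is the greatest common divisor (with $\gcd(0,b)=b$). *)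

(* Defs.v *)
From mathcomp Require Import all_boot all_order all_algebra.
Import GRing.Theory.
Set Implicit Arguments. Unset Strict Implicit. Unset Printing Implicit Defensive.

(* Moebius function: mu(n) = (-1)^r if n > 0 is a product of r distinct
   primes, 0 if n > 0 has a squared prime factor; mu(0) = 0 (never used). *)
Definition moebius (n : nat) : int :=
  if (0 < n)%N && all (fun p => logn p n == 1)%N (primes n)
  then ((-1) ^+ size (primes n))%R else 0%R.

Definition fixed_of_order (n e k m : nat) : bool :=
  [&& (0 < k)%N, (m ^ (e ^ k) == m %[mod n])
   & [forall j : 'I_k, (0 < j)%N ==> (m ^ (e ^ j) != m %[mod n])]].

Definition E_set (n e k : nat) : {set 'I_n} :=
  [set m : 'I_n | fixed_of_order n e k m].

(* Main.v *)
Require Import Defs.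
From mathcomp Require Import all_boot all_order all_algebra all_field all_fingroup all_solvable.
Import GRing.Theory.
Set Implicit Arguments. Unset Strict Implicit. Unset Printing Implicit Defensive.

Lemma mu1 : moebius 1 = 1%R.
Proof. by []. Qed.

Lemma mu_coprime p d : prime p -> (0 < d)%N -> ~~ (p %| d) ->
  moebius (p * d) = (- moebius d)%R.
Proof.
move=> pp d0 npd.
have p0 := prime_gt0 pp.
have Hperm : perm_eq (primes (p * d)) (p :: primes d).
  apply: uniq_perm; first exact: primes_uniq.
    rewrite /= primes_uniq andbT mem_primes pp d0 /=; exact: npd.
  move=> x; rewrite primesM // primes_prime // !inE.
  done.
rewrite /moebius muln_gt0 p0 d0 /= (perm_all _ Hperm) (perm_size Hperm) /=.
have -> : logn p (p * d) == 1%N.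
  by rewrite lognM // logn_prime // eqxx -[logn p d]/(logn p d) (_ : logn p d = 0%N) //;
   apply/eqP; rewrite eqn0Ngt logn_gt0 mem_primes pp d0 /= npd.
have -> : all (fun x => logn x (p * d) == 1%N) (primes d) =
          all (fun x => logn x d == 1%N) (primes d).
  apply: eq_in_all => x; rewrite mem_primes => /and3P[px _ xd].
  rewrite lognM // logn_prime // .
  have -> : (x == p) = false.
    by apply/negP => /eqP xp; move: npd; rewrite -xp xd.
  by [].
case E: (all _ (primes d)); rewrite /= ?E /=; first by rewrite exprS mulN1r. by rewrite oppr0.
Qed.

Lemma mu_dvd p d : prime p -> (0 < d)%N -> p %| d -> moebius (p * d) = 0%R.
Proof.
move=> pp d0 pd; have p0 := prime_gt0 pp.
rewrite /moebius; case: ifP => // /andP[_ /allP H].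
have : p \in primes (p * d) by rewrite mem_primes pp muln_gt0 p0 d0 dvdn_mulr.
move/H; rewrite lognM // logn_prime // eqxx.
have : (0 < logn p d)%N by rewrite logn_gt0 mem_primes pp d0.
by case: (logn p d).
Qed.

Lemma div_gt0 d k : (0 < k)%N -> d \in divisors k -> (0 < d)%N.
Proof. by move=> k0; rewrite -dvdn_divisors // => /dvdn_gt0; apply. Qed.

Lemma sum_mu m : (0 < m)%N ->
  (\sum_(d <- divisors m) moebius d)%R = ((m == 1)%N%:R : int).
Proof.
move=> m0; case: (ltngtP m 1) => [|m1|->]; last by rewrite (_ : divisors 1 = [:: 1%N]) // big_seq1.
  by rewrite ltnS leqn0 => /eqP m00; rewrite m00 in m0.
set p := pdiv m.
have pp : prime p by apply: pdiv_prime.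
have pm : p %| m by apply: pdiv_dvd.
have p0 := prime_gt0 pp.
have mp0 : (0 < m %/ p)%N by rewrite divn_gt0 // dvdn_leq.
rewrite (bigID (fun d => p %| d)) /=.
have E2 : (\sum_(d <- divisors m | (p %| d)%N) moebius d =
          \sum_(d <- divisors (m %/ p) | ~~ (p %| d)%N) (- moebius d))%R.
  rewrite -big_filter.
  have Hp : perm_eq [seq d <- divisors m | p %| d] (map (muln p) (divisors (m %/ p))).
    apply: uniq_perm.
    - by rewrite filter_uniq // divisors_uniq.
    - rewrite map_inj_uniq ?divisors_uniq //; by move=> a b /eqP; rewrite eqn_pmul2l // => /eqP.
    move=> x; rewrite mem_filter -dvdn_divisors //; apply/andP/mapP.
      move=> [px xm]; exists (x %/ p); last by rewrite mulnC divnK.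
      by rewrite -dvdn_divisors // dvdn_divRL // divnK.
    move=> [y]; rewrite -dvdn_divisors // => ym ->; split; first exact: dvdn_mulr.
    by rewrite mulnC -dvdn_divRL.
  rewrite (perm_big _ Hp) big_map /=.
  rewrite (bigID (fun d => p %| d)) /= big_seq_cond big1 ?add0r; last first.
    by move=> i /andP[iin pi]; rewrite mu_dvd // (div_gt0 mp0 iin).
  rewrite big_seq_cond [RHS]big_seq_cond; apply: eq_bigr => i /andP[iin pi].
  by rewrite mu_coprime // (div_gt0 mp0 iin).
have E1 : (\sum_(d <- divisors m | ~~ (p %| d)%N) moebius d =
          \sum_(d <- divisors (m %/ p) | ~~ (p %| d)%N) moebius d)%R.
  rewrite -big_filter -[RHS]big_filter; apply: perm_big.
  apply: uniq_perm; rewrite ?filter_uniq ?divisors_uniq //.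
  move=> x; rewrite !mem_filter -!dvdn_divisors //.
  apply/andP/andP => -[px xm]; split => //.
    have cx : coprime x p by rewrite coprime_sym prime_coprime.
    by rewrite -(Gauss_dvdl _ cx) divnK.
  by apply: dvdn_trans xm _; apply: dvdn_div.
rewrite E1 E2 sumrN addNr.
by case: m m1 {p pp pm mp0 E1 E2 m0 p0} => [|[]].
Qed.

Lemma perm_mul c m : (0 < c)%N -> c %| m -> (0 < m)%N ->
  perm_eq [seq d <- divisors m | c %| d] (map (muln c) (divisors (m %/ c))).
Proof.
move=> c0 cm m0.
have mc0 : (0 < m %/ c)%N by rewrite divn_gt0 // dvdn_leq.
apply: uniq_perm.
- by rewrite filter_uniq // divisors_uniq.
- rewrite map_inj_uniq ?divisors_uniq //; by move=> a b /eqP; rewrite eqn_pmul2l // => /eqP.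
move=> x; rewrite mem_filter -dvdn_divisors //; apply/andP/mapP.
  move=> [px xm]; exists (x %/ c); last by rewrite mulnC divnK.
  by rewrite -dvdn_divisors // dvdn_divRL // divnK.
move=> [y]; rewrite -dvdn_divisors // => ym ->; split; first exact: dvdn_mulr.
by rewrite mulnC -dvdn_divRL.
Qed.

Lemma divKdiv K d : (0 < K)%N -> d %| K -> K %/ (K %/ d) = d.
Proof. by move=> K0 dK; rewrite divnA // mulKn. Qed.

Lemma perm_compl K : (0 < K)%N ->
  perm_eq (divisors K) (map (fun d => K %/ d) (divisors K)).
Proof.
move=> K0; apply: uniq_perm; rewrite ?divisors_uniq //.
  rewrite map_inj_in_uniq ?divisors_uniq // => a b.
  rewrite -!dvdn_divisors // => aK bK E.
  by rewrite -(divKdiv K0 aK) E divKdiv.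
move=> x; rewrite -dvdn_divisors //; apply/idP/mapP.
  move=> xK; exists (K %/ x); first by rewrite -dvdn_divisors // dvdn_div.
  by rewrite divKdiv.
by move=> [y]; rewrite -dvdn_divisors // => yK ->; apply: dvdn_div.
Qed.

Lemma inner_mu c k : (0 < k)%N -> c %| k ->
  (\sum_(d <- divisors k | (c %| d)%N) moebius (k %/ d))%R = ((c == k)%N%:R : int).
Proof.
move=> k0 ck.
have c0 : (0 < c)%N by apply: dvdn_gt0 ck.
have K0 : (0 < k %/ c)%N by rewrite divn_gt0 // dvdn_leq.
rewrite -big_filter (perm_big _ (perm_mul c0 ck k0)) big_map.
under eq_bigr do rewrite divnMA.
rewrite -(big_map (fun d => k %/ c %/ d) xpredT moebius).
rewrite -(perm_big _ (perm_compl K0)) sum_mu //.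
rewrite (_ : (k %/ c == 1) = (c == k)) //; apply/eqP/eqP => [E|->]; last by rewrite divnn k0.
by rewrite -(divnK ck) E mul1n.
Qed.

Lemma mobius_inv (f F : nat -> int) k : (0 < k)%N ->
  (forall d, (0 < d)%N -> F d = (\sum_(c <- divisors d) f c)%R) ->
  f k = (\sum_(d <- divisors k) moebius (k %/ d) * F d)%R.
Proof.
move=> k0 HF.
transitivity (\sum_(d <- divisors k) \sum_(c <- divisors k)
   (moebius (k %/ d) * (if (c %| d)%N then f c else 0)))%R; last first.
  rewrite big_seq [RHS]big_seq; apply: eq_bigr => d dk.
  have d0 := div_gt0 k0 dk.
  rewrite HF // mulr_sumr.
  rewrite [LHS](eq_bigr (fun c => if (c %| d)%N then moebius (k %/ d) * f c else 0)%R); last first.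
    by move=> c _; case: ifP; rewrite ?mulr0.
  rewrite -big_mkcond /=.
  rewrite -big_filter -[RHS]big_filter; apply: perm_big.
  apply: uniq_perm; rewrite ?filter_uniq ?divisors_uniq //.
  move=> x; rewrite !mem_filter -!dvdn_divisors //=.
  apply/andP/idP => [[] //|xd]; split => //.
  by apply: dvdn_trans xd _; rewrite dvdn_divisors.
rewrite exchange_big /=.
transitivity (\sum_(c <- divisors k) f c * ((c == k)%N%:R : int))%R.
  rewrite (bigD1_seq k) ?divisors_id ?divisors_uniq //= eqxx mulr1 big1 ?addr0 //.
  by move=> i /negPf ->; rewrite mulr0.
rewrite big_seq [RHS]big_seq; apply: eq_bigr => c ck.
rewrite -inner_mu; last by rewrite dvdn_divisors.
rewrite mulr_sumr big_mkcond /=; apply: eq_bigr => d _; case: ifP => _; by rewrite ?mulr0 // mulrC. by [].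
Qed.


Lemma count_dvd m g : (0 < m)%N -> \sum_(0 <= i < m * g) (m %| i : nat) = g.
Proof.
move=> m0; elim: g => [|g IH]; first by rewrite muln0 big_geq.
rewrite mulnSr (@big_cat_nat _ _ _ (m * g)) ?leq_addr //= IH.
rewrite -{1}[m * g]add0n big_addn addKn.
rewrite (eq_bigr (fun i => (m %| i : nat))); last by move=> i _; rewrite dvdn_addl ?dvdn_mulr.
rewrite big_ltn // dvdn0 big_nat big1 ?addn0 ?addn1 // => i /andP[i1 im].
by case: (boolP (m %| i)) => // H; have := dvdn_leq i1 H; rewrite leqNgt im.
Qed.

Lemma card_pred_ord n (P : pred nat) : #|[set i : 'I_n | P i]| = \sum_(0 <= i < n) (P i : nat).
Proof.
rewrite cardsE -sum1_card big_mkcond /= big_mkord; apply: eq_bigr => i _.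
by rewrite /in_mem /=; case: (P i).
Qed.

Lemma card_mult n D : (0 < n)%N -> #|[set i : 'I_n | n %| i * D]| = gcdn D n.
Proof.
move=> n0.
set g := gcdn D n.
have g0 : (0 < g)%N by rewrite gcdn_gt0 n0 orbT.
set m := n %/ g. set D' := D %/ g.
have En : n = m * g by rewrite divnK // dvdn_gcdr.
have ED : D = D' * g by rewrite divnK // dvdn_gcdl.
have m0 : (0 < m)%N by move: n0; rewrite En muln_gt0 => /andP[].
have cop : coprime m D'.
  rewrite /coprime gcdnC; apply/eqP; apply/eqP; rewrite -(eqn_pmul2r g0) mul1n.
  by rewrite muln_gcdl -ED -En.
rewrite (eq_card (B := [set i : 'I_n | m %| i])); last first.
  move=> i; rewrite !inE [in LHS]ED {1}En mulnA dvdn_pmul2r //.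
  by rewrite Gauss_dvdl.
by rewrite card_pred_ord En count_dvd.
Qed.

Local Open Scope ring_scope.
Lemma count_ff (F : finFieldType) (N : nat) : (0 < N)%N ->
  #|[set x : F | x ^+ N == x]| = (gcdn N.-1 #|F|.-1).+1.
Proof.
move=> N0.
set n := #|F|.-1.
have Fn : #|F| = n.+1 by rewrite prednK // ltnW // finNzRing_gt1.
have n0 : (0 < n)%N by rewrite -ltnS -Fn finNzRing_gt1.
have unity : forall x : F, x != 0 -> x ^+ n = 1.
  by move=> x x0; apply: (mulfI x0); rewrite -exprS -Fn expf_card mulr1.
have : has n.-primitive_root (enum (predC1 (0 : F))).
  apply: has_prim_root => //.
  - apply/allP => x; rewrite mem_enum /= => x0; rewrite unity_rootE; apply/eqP; exact: unity.
  - exact: enum_uniq.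
  - by rewrite -cardE cardC1.
case/hasP => g _ gprim.
have g0 : g != 0.
  apply/eqP => E; have := prim_expr_order gprim.
  by rewrite E expr0n eqn0Ngt n0 /= => /eqP; rewrite eq_sym oner_eq0.
set S' := [set x : F | (x != 0) && (x ^+ N.-1 == 1)].
have ES : [set x : F | x ^+ N == x] = 0 |: S'.
  apply/setP => x; rewrite !inE.
  case: (eqVneq x 0) => [->|x0] /=; first by rewrite expr0n gtn_eqF // eqxx.
  apply/eqP/eqP => [H|H].
    by apply: (mulfI x0); rewrite mulr1 -exprS prednK.
  by rewrite -(prednK N0) exprS H mulr1.
rewrite ES cardsU1 inE eqxx /= add1n; congr _.+1.
have ES' : S' = [set g ^+ (nat_of_ord i) | i in [set i : 'I_n | (n %| i * N.-1)%N]].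
  apply/setP => x; rewrite inE; apply/andP/imsetP.
    move=> [x0 /eqP xN]; have [i Ex] := prim_rootP gprim (unity x x0).
    exists i => //; rewrite inE (prim_order_dvd gprim) exprM -Ex xN.
    done.
  move=> [i]; rewrite inE => H ->; split; first exact: expf_neq0.
  by rewrite -exprM -(prim_order_dvd gprim).
rewrite ES' card_imset ?card_mult //.
move=> i j /eqP; rewrite (eq_prim_root_expr gprim) !modn_small // => /eqP ij.
exact: val_inj.
Qed.

Lemma count_p p N : prime p -> (0 < N)%N ->
  #|[set a : 'I_p | (a ^ N == a %[mod p])%N]| = (gcdn (N - 1) (p - 1) + 1)%N.
Proof.
move=> pp N0.
have Fp := card_Fp pp.
pose phi := fun a : 'I_p => (a%:R : 'F_p).
have Enat : forall a b : nat, ((a%:R : 'F_p) == b%:R) = (a == b %[mod p])%N.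
  by move=> a b; rewrite -val_eqE /= !val_Fp_nat.
have phi_inj : injective phi.
  by move=> a b /eqP; rewrite Enat !modn_small // => /eqP/val_inj.
have onto := inj_card_onto phi_inj (eq_leq (etrans Fp (esym (card_ord p)))).
have EE : [set x : 'F_p | x ^+ N == x] = phi @: [set a : 'I_p | (a ^ N == a %[mod p])%N].
  apply/setP => x; have /codomP [a ->] := onto x.
  by rewrite mem_imset // !inE /phi -natrX Enat.
by rewrite -(card_imset _ phi_inj) -EE count_ff // Fp !subn1 addn1.
Qed.

Lemma crt_card p q (P Q : nat -> bool) : coprime p q -> (0 < p)%N -> (0 < q)%N ->
  #|[set m : 'I_(p * q) | P (m %% p)%N && Q (m %% q)%N]| =
  (#|[set a : 'I_p | P a]| * #|[set b : 'I_q | Q b]|)%N.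
Proof.
move=> cpq p0 q0.
pose h := fun m : 'I_(p * q) => (Ordinal (ltn_pmod m p0), Ordinal (ltn_pmod m q0)).
have h_inj : injective h.
  move=> a b [] Ea Eb.
  have : (a == b %[mod p * q])%N by rewrite chinese_remainder // Ea Eb !eqxx.
  by rewrite !modn_small // => /eqP/val_inj.
have hc : (#|{: 'I_p * 'I_q}| <= #|{: 'I_(p * q)}|)%N by rewrite card_prod !card_ord.
have onto := inj_card_onto h_inj hc.
rewrite -cardsX -(card_imset _ h_inj); apply: eq_card.
case=> a b; have /codomP [m E] := onto (a, b); rewrite E. by rewrite mem_imset // !inE.
Qed.

Local Close Scope ring_scope.

Definition Fx (n e j m : nat) : bool := (m ^ (e ^ j) == m %[mod n]).

Lemma Fx_add n e a b m : Fx n e a m -> Fx n e (a + b) m = Fx n e b m.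
Proof.
rewrite /Fx => /eqP Ha.
by rewrite expnD expnM -modnXm Ha modnXm.
Qed.

Lemma Fx_mul n e a c r m : Fx n e a m -> Fx n e (a * c + r) m = Fx n e r m.
Proof.
move=> Ha; elim: c => [|c IH]; first by rewrite muln0 add0n.
by rewrite mulnS -addnA Fx_add.
Qed.

Lemma Fx0 n e m : Fx n e 0 m.
Proof. by rewrite /Fx expn0 expn1. Qed.

Lemma fo_dvd n e d k m : fixed_of_order n e d m -> Fx n e k m -> d %| k.
Proof.
move=> /and3P[d0 Fd /forallP H] Fk.
have Fr : Fx n e (k %% d) m by rewrite -(Fx_mul (k %/ d) _ Fd) mulnC -divn_eq.
case: (posnP (k %% d)) => [r0|r0]; first by rewrite /dvdn r0.
have := H (Ordinal (ltn_pmod k d0)); rewrite /= r0 /=.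
by move/negP; rewrite -/(Fx n e (k %% d) m) Fr.
Qed.

Lemma fo_Fx n e d k m : fixed_of_order n e d m -> d %| k -> Fx n e k m.
Proof.
move=> /and3P[d0 Fd _] /dvdnP[c ->].
by rewrite -[c * d]addn0 mulnC Fx_mul // Fx0.
Qed.

Lemma fo_uniq n e d d' m : fixed_of_order n e d m -> fixed_of_order n e d' m -> d = d'.
Proof.
move=> H H'; apply/eqP; rewrite eqn_dvd (fo_dvd H) ?(fo_dvd H') //.
  by case/and3P: H.
by case/and3P: H'.
Qed.

Lemma fo_exists n e k m : 0 < k -> Fx n e k m -> exists d, fixed_of_order n e d m.
Proof.
move=> k0 Fk.
have ex : exists j, (0 < j) && Fx n e j m by exists k; rewrite k0.
case: (ex_minnP ex) => d /andP[d0 Fd] dmin.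
exists d; rewrite /fixed_of_order d0 -/(Fx n e d m) Fd /=.
apply/forallP => j; apply/implyP => j0; apply/negP => Fj.
by have := dmin j; rewrite j0 /= => /(_ Fj); rewrite leqNgt ltn_ord.
Qed.

Lemma sum_fo n e k m : 0 < k ->
  \sum_(d <- divisors k) (fixed_of_order n e d m : nat) = (Fx n e k m : nat).
Proof.
move=> k0; case Fk: (Fx n e k m).
  have [d0 H0] := fo_exists k0 Fk.
  have d0k : d0 \in divisors k by rewrite -dvdn_divisors // (fo_dvd H0).
  rewrite (bigD1_seq d0) ?divisors_uniq //= H0 big1 // => d /negPf dd.
  by case H: (fixed_of_order n e d m) => //; rewrite (fo_uniq H H0) eqxx in dd.
rewrite big_seq big1 // => d; rewrite -dvdn_divisors // => dk.
by case H: (fixed_of_order n e d m) => //; rewrite (fo_Fx H dk) in Fk.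
Qed.

Lemma card_sum (T : finType) (P : pred T) : #|[set x | P x]| = \sum_(x : T) (P x : nat).
Proof.
rewrite cardsE -sum1_card big_mkcond /=; apply: eq_bigr => i _.
by rewrite /in_mem /=; case: (P i).
Qed.

Lemma card_part n e k : 0 < k ->
  #|[set m : 'I_n | Fx n e k m]| = \sum_(d <- divisors k) #|E_set n e d|.
Proof.
move=> k0; rewrite /E_set.
under [RHS]eq_bigr do rewrite card_sum.
rewrite exchange_big card_sum /=; apply: eq_bigr => m _.
by rewrite sum_fo.
Qed.

Lemma main_count p q N : prime p -> prime q -> p != q -> 0 < N ->
  #|[set m : 'I_(p * q) | Fx (p * q) N 1 m]| =
  ((gcdn (N - 1) (p - 1) + 1) * (gcdn (N - 1) (q - 1) + 1)).
Proof.
move=> pp pq npq N0.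
have cpq : coprime p q by rewrite prime_coprime // dvdn_prime2.
rewrite (eq_card (B := [set m : 'I_(p * q) |
   ((m %% p) ^ N == (m %% p) %[mod p]) && ((m %% q) ^ N == (m %% q) %[mod q])])); last first.
  move=> m; rewrite !inE /Fx expn1 chinese_remainder //.
  by rewrite !modnXm !modn_mod.
rewrite (crt_card (fun a => a ^ N == a %[mod p]) (fun a => a ^ N == a %[mod q])) ?prime_gt0 //.
by rewrite !count_p.
Qed.

Local Open Scope ring_scope.

Theorem theorem2 (p q e k : nat) :
  prime p -> prime q -> p != q -> (0 < e)%N -> coprime e (totient (p * q)) ->
  (0 < k)%N ->
  (#|E_set (p * q) e k|%:Z =
   \sum_(d <- divisors k)
     moebius (k %/ d) *
     ((gcdn (e ^ d - 1) (p - 1) + 1) * (gcdn (e ^ d - 1) (q - 1) + 1))%N%:Z).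
Proof.
move=> pp pq npq e0 _ k0.
rewrite (@mobius_inv (fun d => #|E_set (p * q) e d|%:Z)
          (fun d => #|[set m : 'I_(p * q) | Fx (p * q) e d m]|%:Z) k k0); last first.
  move=> d d0; rewrite card_part //.
  by rewrite (big_morph Posz PoszD (erefl _)).
rewrite big_seq [RHS]big_seq; apply: eq_bigr => d dk.
congr (_ * _%:Z).
rewrite (eq_card (B := [set m : 'I_(p * q) | Fx (p * q) (e ^ d) 1 m])); last first.
  by move=> m; rewrite !inE /Fx.
by rewrite main_count // expn_gt0 e0.
Qed.
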